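(* Let $R$ be a commutative ring with identity and $a\in R$. Then $$\bigcap_{b\in R} b\Gamma_b(R)\subseteq a\Gamma_a(R)\subseteq S_a(R)\subseteq S(R)=\mathcal{N}(R)\subseteq \operatorname{Rad}(R).$$
   Context: For $b\in R$, $b\Gamma_{b}(R)=\{br \mid r\in R,\ b^{k}r=0 \text{ for some } k\in\mathbb{Z}^{+}\}$. An $R$-module $N$ is $b$-reduced if $b^2n=0$ implies $bn=0$ for $n\in N$, and reduced if it is $b$-reduced for all $b$. A proper ideal $I$ of $R$ is $a$-semiprime (resp. semiprime) if the $R$-module $R/I$ is $a$-reduced (resp. reduced). $S_a(R)$ and $S(R)$ are the intersections of all $a$-semiprime, resp. semiprime, ideals; $\mathcal{N}(R)$ is the set of nilpotent elements of $R$; $\operatorname{Rad}(R)$ is the Jacobson radical. *)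

(* Defs.v *)
From mathcomp Require Import all_boot all_algebra.
Set Implicit Arguments. Unset Strict Implicit. Unset Printing Implicit Defensive.
Import GRing.Theory.
Local Open Scope ring_scope.

Definition bGamma (R : comNzRingType) (b : R) : R -> Prop :=
  fun x => exists r : R, x = b * r /\ exists k : nat, (0 < k)%N /\ b ^+ k * r = 0.

Definition is_ideal (R : comNzRingType) (I : R -> Prop) : Prop :=
  [/\ I 0, (forall x y, I x -> I y -> I (x + y)) & (forall r x, I x -> I (r * x))].

Definition proper_ideal (R : comNzRingType) (I : R -> Prop) : Prop :=
  is_ideal I /\ ~ I 1.

(* The R-module R/I is a-reduced: a^2 n = 0 implies a n = 0 for n in R/I,
   i.e. for x in R, a^2 x in I implies a x in I. *)
Definition a_semiprime (R : comNzRingType) (a : R) (I : R -> Prop) : Prop :=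
  proper_ideal I /\ (forall x : R, I (a ^+ 2 * x) -> I (a * x)).

Definition semiprime (R : comNzRingType) (I : R -> Prop) : Prop :=
  proper_ideal I /\ (forall b x : R, I (b ^+ 2 * x) -> I (b * x)).

Definition S_a (R : comNzRingType) (a : R) : R -> Prop :=
  fun x => forall I : R -> Prop, a_semiprime a I -> I x.

Definition S_R (R : comNzRingType) : R -> Prop :=
  fun x => forall I : R -> Prop, semiprime I -> I x.

Definition nilradical (R : comNzRingType) : R -> Prop :=
  fun x => exists n : nat, x ^+ n = 0.

Definition maximal_ideal (R : comNzRingType) (M : R -> Prop) : Prop :=
  proper_ideal M /\
  (forall J : R -> Prop, is_ideal J -> (forall x, M x -> J x) ->
     (forall x, J x -> M x) \/ J 1).

Definition jacobson (R : comNzRingType) : R -> Prop :=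
  fun x => forall M : R -> Prop, maximal_ideal M -> M x.

(* Main.v *)
Require Import Defs.
From mathcomp Require Import all_boot all_algebra.
From mathcomp Require Import zify ring.
Local Open Scope ring_scope.
Import GRing.Theory.
Set Implicit Arguments.

Lemma nil_pow_ge (R : comNzRingType) (x : R) n k : x ^+ n = 0 -> (n <= k)%N -> x ^+ k = 0.
Proof. by move=> Hn Hk; rewrite -(subnKC Hk) exprD Hn mul0r. Qed.

Lemma nil_add (R : comNzRingType) (x y : R) :
  nilradical x -> nilradical y -> nilradical (x + y).
Proof.
move=> [n Hn] [m Hm]; exists (n + m)%N.
rewrite exprDn big1 // => i _.
case: (leqP m i) => Hi.
  by rewrite (@nil_pow_ge _ _ _ _ Hm Hi) mulr0 mul0rn.
have Hi' : (n <= n + m - i)%N by lia.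
by rewrite (@nil_pow_ge _ _ _ _ Hn Hi') mul0r mul0rn.
Qed.

Lemma nil_ideal (R : comNzRingType) : is_ideal (@nilradical R).
Proof.
split.
- by exists 1%N; rewrite expr1.
- exact: nil_add.
- by move=> r x [n Hn]; exists n; rewrite exprMn Hn mulr0.
Qed.

Lemma nil_semiprime (R : comNzRingType) : semiprime (@nilradical R).
Proof.
split; first split.
- exact: nil_ideal.
- by move=> [n Hn]; move: Hn; rewrite expr1n; apply/eqP; exact: oner_neq0.
move=> b x [n Hn]; exists (n + n)%N.
have E : (b*x)^+(n+n) = (b^+2*x)^+n * x^+n.
  rewrite exprD !exprMn; ring.
by rewrite E Hn mul0r.
Qed.

Theorem mainTheorem13 (R : comNzRingType) (a : R) :
  [/\ (forall x : R, (forall b : R, bGamma b x) -> bGamma a x),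
      (forall x : R, bGamma a x -> S_a a x),
      (forall x : R, S_a a x -> S_R x),
      (forall x : R, S_R x <-> nilradical x)
    & (forall x : R, nilradical x -> jacobson x)].
Proof.
split.
- by move=> x H; apply: H.
- move=> x [r [-> [k [Hk Hr]]]] I [[[I0 ID IM] _] Hs].
  have H : forall j, I (a ^+ j.+1 * r) -> I (a * r).
    elim=> [|j IH]; first by move=> Hh; exact: Hh.
    by move=> Hj; apply: IH; rewrite exprS -mulrA; apply: Hs;
       rewrite mulrA -exprD add2n.
  by apply: (H k.-1); rewrite prednK // Hr.
- by move=> x H I [HI Hs]; apply: H; split; [exact: HI | exact: Hs].
- move=> x; split.
    by move=> H; apply: H; exact: nil_semiprime.
  move=> [n Hn] I [[[I0 ID IM] _] Hs].
  have H : forall j, I (x ^+ j.+1) -> I x.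
    elim=> [|j IH]; first by move=> Hh; exact: Hh.
    move=> Hj; apply: IH; rewrite exprS; apply: Hs.
    by rewrite -exprD add2n.
  by apply: (H n); rewrite exprS Hn mulr0.
- move=> x [n Hn] M [[[M0 MD MM] M1] Mmax].
  pose J := fun y => exists m r, M m /\ y = m + r * x.
  have HJ : is_ideal J.
    split.
    - by exists 0, 0; rewrite mul0r addr0.
    - move=> y z [m [r [Hm ->]]] [m' [r' [Hm' ->]]].
      exists (m + m'), (r + r'); split; first exact: MD.
      by rewrite mulrDl; rewrite !addrA; congr (_ + _); rewrite -!addrA; congr (_ + _); rewrite addrC.
    - move=> s y [m [r [Hm ->]]]; exists (s * m), (s * r); split; first exact: MM.
      by rewrite mulrDr mulrA.
  have HMJ : forall y, M y -> J y by move=> y Hy; exists y, 0; rewrite mul0r addr0.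
  case: (Mmax J HJ HMJ) => [HJM|[m [r [Hm H1]]]].
    by apply: HJM; exists 0, 1; rewrite mul1r add0r.
  exfalso; apply: M1.
  have Hm1 : m = 1 - r * x by rewrite H1 addrK.
  have := subrXX 1 (r * x) n.
  rewrite expr1n exprMn Hn mulr0 subr0 -Hm1 => ->.
  by rewrite mulrC; apply: MM.
Qed.
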